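(* In the setting and construction described in the context, with $M_{s,t}=(1+R(4,R(4,s)))^{t-2}$: (1) $|S_{t-1}|\le M_{s,t}$ (a constant depending only on $s$ and $t$); (2) $V\setminus(S_{t-1}\cup N(S_{t-1}))=\emptyset$, i.e. $S_{t-1}$ is a dominating set of $G$.
   Context: All graphs are finite and simple. $P_t$ is the path on $t$ vertices; $K_4$ is the complete graph on $4$ vertices; $SDK_s$ is the one-subdivision of $K_{1,s}$ (replace each edge $uv$ of the star $K_{1,s}$ by a path $u w v$ through a new vertex $w$). A graph is $\mathcal{H}$-free if it has no induced subgraph isomorphic to a member of $\mathcal{H}$. $R(k,l)$ denotes the Ramsey number: the least integer such that every graph on at least $R(k,l)$ vertices contains a clique on $k$ vertices or a stable set on $l$ vertices. For $X\subseteq V$, $N(X)=\bigcup_{v\in X}N(v)$. A set $D\subseteq V$ is dominating if every vertex outside $D$ has a neighbor in $D$. Setting: $s,t$ are positive integers with $t\ge 2$, and $G=(V,E)$ is a connected $(P_t,SDK_s,K_4)$-free graph. Fix a vertex $a\in V$, and set $S_1=\{a\}$. For $i=1,2,\dots,t-2$ define $S_{i+1}$ as follows: let $B_i=N(S_i)$ and $W_i=V\setminus(B_i\cup S_i)$; enumerate $S_i=\{v_1,\dots,v_{|S_i|}\}$ and for $j=1,\dots,|S_i|$ let $B_i^j=\{v\in B_i\setminus\bigcup_{k<j}B_i^k : v\text{ is adjacent to }v_j\}$ (so $B_i=\bigcup_j B_i^j$); for each $j$ let $X_i^j\subseteq B_i^j$ be an inclusion-minimal set such that every $w\in W_i$ with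 $N(w)\cap B_i^j\neq\emptyset$ satisfies $N(w)\cap X_i^j\ne\emptyset$; let $X_i=\bigcup_j X_i^j$ and $S_{i+1}=S_i\cup X_i$. The choices of enumeration and of minimal sets are arbitrary. *)

(* Defs.v *)
From mathcomp Require Import all_boot.
From Stdlib Require Import ClassicalDescription.
Set Implicit Arguments. Unset Strict Implicit. Unset Printing Implicit Defensive.

Definition simple_graph (T : finType) (e : rel T) : Prop :=
  symmetric e /\ irreflexive e.

Definition connected_graph (T : finType) (e : rel T) : Prop :=
  forall x y : T, connect e x y.

Definition has_induced (U : finType) (h : rel U) (T : finType) (e : rel T) : Prop :=
  exists f : U -> T, injective f /\ forall x y, e (f x) (f y) = h x y.

Definition induced_free (U : finType) (h : rel U) (T : finType) (e : rel T) : Prop :=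
  ~ has_induced h e.

Definition path_rel (t : nat) : rel 'I_t :=
  fun i j => (i.+1 == j :> nat) || (j.+1 == i :> nat).

Arguments path_rel t : clear implicits.

Definition complete_rel (n : nat) : rel 'I_n := fun i j => i != j.

Arguments complete_rel n : clear implicits.

(* SDK_s: the one-subdivision of the star K_{1,s}.
   None = centre u; inl i = subdivision vertex w_i; inr i = leaf v_i. *)
Definition sdk_rel (s : nat) : rel (option ('I_s + 'I_s)) :=
  fun x y =>
    match x, y with
    | None, Some (inl _) => true
    | Some (inl _), None => true
    | Some (inl i), Some (inr j) => i == j
    | Some (inr i), Some (inl j) => i == j
    | _, _ => false
    end.

Arguments sdk_rel s : clear implicits.

Definition is_clique (T : finType) (e : rel T) (A : {set T}) : bool :=
  [forall x in A, forall y in A, (x != y) ==> e x y].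
Definition is_stable (T : finType) (e : rel T) (A : {set T}) : bool :=
  [forall x in A, forall y in A, ~~ e x y].

Definition ramsey_prop (k l n : nat) : Prop :=
  forall (m : nat) (e : rel 'I_m), simple_graph e -> n <= m ->
    (exists A : {set 'I_m}, #|A| = k /\ is_clique e A) \/
    (exists A : {set 'I_m}, #|A| = l /\ is_stable e A).

Definition ramsey_bool (k l : nat) : pred nat :=
  fun n => if excluded_middle_informative (ramsey_prop k l n) then true else false.

(* R(k,l): the least n with ramsey_prop k l n (exists by Ramsey's theorem;
   the fallback value 0 is never used). *)
Definition Ramsey (k l : nat) : nat :=
  match excluded_middle_informative (exists n, ramsey_bool k l n) with
  | left h => ex_minn h
  | right _ => 0
  end.

Definition nbhd (T : finType) (e : rel T) (v : T) : {set T} := [set w | e v w].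
Definition nbhdS (T : finType) (e : rel T) (X : {set T}) : {set T} :=
  \bigcup_(v in X) nbhd e v.

(* Given B and an enumeration vs = [v_1; ...; v_m] of S, the list
   [B^1; ...; B^m] with B^j = {v in B \ (B^1 u ... u B^{j-1}) : v ~ v_j}. *)
Fixpoint Bparts_aux (T : finType) (e : rel T) (B acc : {set T}) (vs : seq T)
  : seq {set T} :=
  match vs with
  | [::] => [::]
  | v :: vs' =>
      let Bj := [set w in B :\: acc | e v w] in
      Bj :: Bparts_aux e B (acc :|: Bj) vs'
  end.

Definition Bparts (T : finType) (e : rel T) (B : {set T}) (vs : seq T) :=
  Bparts_aux e B set0 vs.

Definition dom_prop (T : finType) (e : rel T) (W Bj : {set T}) : pred {set T} :=
  fun X => (X \subset Bj) &&
    [forall w in W, [exists b in Bj, e w b] ==> [exists x in X, e w x]].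

(* One step S_i -> S_{i+1} of the construction, for some choice of
   enumeration and of inclusion-minimal sets X_i^j. *)
Definition constr_step (T : finType) (e : rel T) (S S' : {set T}) : Prop :=
  let B := nbhdS e S in
  let W := ~: (B :|: S) in
  exists vs : seq T, uniq vs /\ (forall x, (x \in vs) = (x \in S)) /\
  exists Xs : seq {set T}, size Xs = size vs /\
    (forall j, j < size vs ->
       minset (dom_prop e W (nth set0 (Bparts e B vs) j)) (nth set0 Xs j)) /\
    S' = S :|: \bigcup_(X <- Xs) X.

(* Main.v *)
Require Import Defs.
From mathcomp Require Import all_boot zify.
From Stdlib Require Import ClassicalDescription.
Set Implicit Arguments. Unset Strict Implicit. Unset Printing Implicit Defensive.

Lemma cliqueP (T : finType) (e : rel T) (A : {set T}) :
  reflect (forall x y, x \in A -> y \in A -> x != y -> e x y) (is_clique e A).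
Proof.
apply: (iffP forallP) => [H x y xA yA nxy | H x].
  by move: (H x); rewrite xA /= => /forallP /(_ y); rewrite yA nxy.
by apply/implyP => xA; apply/forallP => y; apply/implyP => yA; apply/implyP; apply: H.
Qed.

Lemma stableP (T : finType) (e : rel T) (A : {set T}) :
  reflect (forall x y, x \in A -> y \in A -> ~~ e x y) (is_stable e A).
Proof.
apply: (iffP forallP) => [H x y xA yA | H x].
  by move: (H x); rewrite xA /= => /forallP /(_ y); rewrite yA.
by apply/implyP => xA; apply/forallP => y; apply/implyP => yA; apply: H.
Qed.

Definition ramG (k l n : nat) := forall (T : finType) (e : rel T) (A : {set T}),
  simple_graph e -> n <= #|A| ->
  exists2 C : {set T}, C \subset A &
    ((#|C| = k /\ is_clique e C) \/ (#|C| = l /\ is_stable e C)).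

Lemma ramG_exists k l : exists n, ramG k l n.
Proof.
elim: k l => [|k IHk] l.
  exists 0 => T e A _ _; exists set0; first exact: sub0set.
  by left; split; [rewrite cards0 | apply/cliqueP => x y; rewrite inE].
elim: l => [|l IHl].
  exists 0 => T e A _ _; exists set0; first exact: sub0set.
  by right; split; [rewrite cards0 | apply/stableP => x y; rewrite inE].
have [n1 H1] := IHk l.+1; have [n2 H2] := IHl.
exists (n1 + n2).+1 => T e A [esym eirr] hA.
have /set0Pn [v vA] : A != set0 by rewrite -card_gt0; apply: leq_trans hA.
set A' := A :\ v.
have cA : #|A| = #|A'| + 1 by rewrite (cardsD1 v A) vA addnC.
have hsum := cardsID (nbhd e v) A'.
have vA' : v \notin A' by rewrite !inE eqxx.
have sA' : A' \subset A by apply: subD1set.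
have [hN|hN] := leqP n1 #|A' :&: nbhd e v|.
  have [C sC [[cC clC]|[cC stC]]] := H1 T e _ (conj esym eirr) hN.
  - have vC : v \notin C.
      by apply/negP => /(subsetP sC); rewrite inE (negbTE vA').
    exists (v |: C).
      apply/subsetP => x; rewrite !inE => /orP [/eqP ->//|].
      by move/(subsetP sC)/(subsetP (subsetIl _ _))/(subsetP sA').
    left; split; first by rewrite cardsU1 vC cC.
    have Cn : forall y, y \in C -> e v y.
      by move=> y /(subsetP sC); rewrite !inE => /andP [_].
    apply/cliqueP => x y; rewrite !inE => /orP [/eqP ->|xC] /orP [/eqP ->|yC].
    + by rewrite eqxx.
    + by move=> _; apply: Cn.
    + by move=> _; rewrite esym; apply: Cn.
    + by move/cliqueP: clC; apply.
  - exists C => //; last by right.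
    by apply: subset_trans sC _; apply: subset_trans sA'; apply: subsetIl.
have hM : n2 <= #|A' :\: nbhd e v| by lia.
have [C sC [[cC clC]|[cC stC]]] := H2 T e _ (conj esym eirr) hM.
- exists C => //; last by left.
  by apply: subset_trans sC _; apply: subset_trans sA'; apply: subsetDl.
- have vC : v \notin C.
    by apply/negP => /(subsetP sC); rewrite inE (negbTE vA') andbF.
  exists (v |: C).
    apply/subsetP => x; rewrite !inE => /orP [/eqP ->//|].
    by move/(subsetP sC)/(subsetP (subsetDl _ _))/(subsetP sA').
  right; split; first by rewrite cardsU1 vC cC.
  have Cn : forall y, y \in C -> ~~ e v y.
    by move=> y /(subsetP sC); rewrite !inE => /andP [].
  apply/stableP => x y; rewrite !inE => /orP [/eqP ->|xC] /orP [/eqP ->|yC].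
  + by rewrite eirr.
  + by apply: Cn.
  + by rewrite esym; apply: Cn.
  + by move/stableP: stC; apply.
Qed.

Lemma ramG_prop k l n : ramG k l n -> ramsey_prop k l n.
Proof.
move=> H m e se hm.
have hm' : n <= #|[set: 'I_m]| by rewrite cardsT card_ord.
have [C _ [[cC clC]|[cC stC]]] := H _ e setT se hm'.
  by left; exists C.
by right; exists C.
Qed.

Lemma Ramsey_spec k l : ramsey_prop k l (Ramsey k l).
Proof.
rewrite /Ramsey; case: excluded_middle_informative => [h|hn].
  case: ex_minnP => n; rewrite /ramsey_bool.
  by case: excluded_middle_informative.
exfalso; apply: hn; have [n Hn] := ramG_exists k l; exists n.
rewrite /ramsey_bool; case: excluded_middle_informative => // hh.
by case: hh; apply: ramG_prop.
Qed.

Lemma prop_ramG k l n : ramsey_prop k l n -> ramG k l n.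
Proof.
move=> H T e A [esym eirr] hn.
pose e' : rel 'I_#|A| := fun i j => e (enum_val i) (enum_val j).
have se' : simple_graph e' by split; [move=> i j; apply: esym | move=> i; apply: eirr].
have inj : {in [set: 'I_#|A|] &, injective (@enum_val T (mem A))}.
  by move=> i j _ _; apply: enum_val_inj.
have sub : forall C' : {set 'I_#|A|}, (@enum_val T (mem A)) @: C' \subset A.
  by move=> C'; apply/subsetP => x /imsetP [i _ ->]; apply: enum_valP.
have [[C' [cC clC]]|[C' [cC stC]]] := H _ e' se' hn.
  exists (enum_val @: C') => //; left; split.
    by rewrite card_in_imset // => i j _ _; apply: enum_val_inj.
  apply/cliqueP => x y /imsetP [i iC ->] /imsetP [j jC ->] nij.
  move/cliqueP: clC; apply => //; apply: contra nij => /eqP -> //.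
exists (enum_val @: C') => //; right; split.
  by rewrite card_in_imset // => i j _ _; apply: enum_val_inj.
apply/stableP => x y /imsetP [i iC ->] /imsetP [j jC ->].
by move/stableP: stC; apply.
Qed.

Lemma RamseyG k l : ramG k l (Ramsey k l).
Proof. exact/prop_ramG/Ramsey_spec. Qed.

Lemma k4_of (T : finType) (e : rel T) (x0 : T) (C : {set T}) :
  simple_graph e -> #|C| = 4 -> is_clique e C -> has_induced (complete_rel 4) e.
Proof.
move=> [esym eirr] cC clC.
have sz : size (enum C) = 4 by rewrite -cardE.
have hc : forall i : 'I_4, nth x0 (enum C) i \in C.
  by move=> i; rewrite -mem_enum mem_nth // sz.
have hu : forall i j : 'I_4, (nth x0 (enum C) i == nth x0 (enum C) j) = (i == j).
  by move=> i j; rewrite nth_uniq ?sz ?enum_uniq.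
exists (fun i : 'I_4 => nth x0 (enum C) i); split.
  by move=> i j /eqP; rewrite hu => /eqP.
move=> i j; rewrite /complete_rel.
case: (eqVneq i j) => [->|nij]; first by rewrite eirr.
by move/cliqueP: clC; apply => //; rewrite hu.
Qed.

Lemma sdk_of (T : finType) (e : rel T) (x0 : T) (s : nat) (v : T) (C : {set T})
  (pw : T -> T) :
  simple_graph e -> #|C| = s ->
  (forall x, x \in C -> e v x) ->
  (forall x, x \in C -> ~~ e v (pw x)) ->
  (forall x y, x \in C -> y \in C -> ~~ e x y) ->
  (forall x y, x \in C -> y \in C -> ~~ e (pw x) (pw y)) ->
  (forall x y, x \in C -> y \in C -> e x (pw y) = (x == y)) ->
  (forall x, x \in C -> v != pw x) ->
  has_induced (sdk_rel s) e.
Proof.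
move=> [esym eirr] cC Hv Hvp Hst Hpst Hx Hvn.
set cs := enum C.
have sz : size cs = s by rewrite -cardE.
have hc : forall i : 'I_s, nth x0 cs i \in C.
  by move=> i; rewrite -mem_enum mem_nth // sz.
have hu : forall i j : 'I_s, (nth x0 cs i == nth x0 cs j) = (i == j).
  by move=> i j; rewrite nth_uniq ?sz ?enum_uniq.
pose f (o : option ('I_s + 'I_s)) := match o with
  | None => v | Some (inl i) => nth x0 cs i | Some (inr i) => pw (nth x0 cs i) end.
exists f; split.
  move=> [[i|i]|] [[j|j]|] //= h.
  - by move/eqP: h; rewrite hu => /eqP ->.
  - by move: (Hx _ _ (hc j) (hc j)); rewrite eqxx -h (negbTE (Hst _ _ (hc j) (hc i))).
  - by move: (Hv _ (hc i)); rewrite h eirr.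
  - by move: (Hx _ _ (hc i) (hc i)); rewrite eqxx h (negbTE (Hst _ _ (hc i) (hc j))).
  - have : e (nth x0 cs i) (pw (nth x0 cs j)) by rewrite -h Hx ?hc // eqxx.
    by rewrite Hx ?hc // hu => /eqP ->.
  - by move: (Hvn _ (hc i)); rewrite h eqxx.
  - by move: (Hv _ (hc j)); rewrite -h eirr.
  - by move: (Hvn _ (hc j)); rewrite h eqxx.
move=> [[i|i]|] [[j|j]|] /=.
- by apply/negbTE/Hst; apply: hc.
- by rewrite Hx ?hc // hu.
- by rewrite esym Hv ?hc.
- by rewrite esym Hx ?hc // hu eq_sym.
- by apply/negbTE/Hpst; apply: hc.
- by rewrite esym; apply/negbTE/Hvp; apply: hc.
- by rewrite Hv ?hc.
- by apply/negbTE/Hvp; apply: hc.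
- by rewrite eirr.
Qed.

Lemma in_nbhdS (T : finType) (e : rel T) (S : {set T}) v w :
  v \in S -> e v w -> w \in nbhdS e S.
Proof. by move=> vS evw; apply/bigcupP; exists v => //; rewrite inE. Qed.

Lemma nbhdSP (T : finType) (e : rel T) (S : {set T}) w :
  reflect (exists2 v, v \in S & e v w) (w \in nbhdS e S).
Proof.
apply: (iffP bigcupP) => [[v vS]|[v vS evw]]; first by rewrite inE; exists v.
by exists v => //; rewrite inE.
Qed.

Lemma minX_bound (T : finType) (e : rel T) (x0 : T) s (S : {set T}) v
  (Bj X : {set T}) :
  simple_graph e -> induced_free (sdk_rel s) e -> induced_free (complete_rel 4) e ->
  v \in S -> (forall b, b \in Bj -> e v b) ->
  minset (dom_prop e (~: (nbhdS e S :|: S)) Bj) X ->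
  #|X| <= Ramsey 4 (Ramsey 4 s).
Proof.
move=> [esym eirr] nsdk nk4 vS hBj /minsetP [dX minX].
set W := ~: (nbhdS e S :|: S) in dX minX.
have [sXB dXf] := andP dX.
pose priv x w := [&& w \in W, e w x & [forall y in X, (y != x) ==> ~~ e w y]].
have hpriv : forall x, x \in X -> exists w, priv x w.
  move=> x xX.
  have ndX : ~~ dom_prop e W Bj (X :\ x).
    apply/negP => d; have := minX _ d (subD1set X x) => eqX.
    by move: xX; rewrite -eqX !inE eqxx.
  move: ndX; rewrite /dom_prop (subset_trans (subD1set X x) sXB) /=.
  move/forallPn => [w]; rewrite negb_imply => /andP [wW]; rewrite negb_imply => /andP [hb hnot].
  move/forallP: dXf => /(_ w); rewrite wW hb /= => /existsP [y /andP [yX ewy]].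
  have yx : y = x.
    apply/eqP; apply: contraNT hnot => nyx; apply/existsP; exists y.
    by rewrite !inE nyx yX ewy.
  exists w; rewrite /priv wW -yx ewy /=.
  apply/forallP => z; apply/implyP => zX; apply/implyP => nzy.
  apply: contra hnot => ewz; apply/existsP; exists z; rewrite !inE zX ewz andbT.
  by rewrite andbT -yx.
pose pw x := odflt x [pick w | priv x w].
have hpw : forall x, x \in X -> priv x (pw x).
  move=> x xX; rewrite /pw; case: pickP => [w hw //|none].
  by have [w hw] := hpriv x xX; move: (none w); rewrite hw.
have pwW : forall x, x \in X -> pw x \in W by move=> x /hpw /and3P [].
have pwx : forall x, x \in X -> e (pw x) x by move=> x /hpw /and3P [].
have pwo : forall x y, x \in X -> y \in X -> x != y -> ~~ e (pw y) x.
  move=> x y xX yX nxy; have /and3P [_ _ /forallP /(_ x)] := hpw y yX.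
  by rewrite xX nxy.
have pwinj : {in X &, injective pw}.
  move=> x y xX yX h; apply/eqP; apply: contraT => nxy.
  by move: (pwo x y xX yX nxy); rewrite -h pwx.
rewrite leqNgt; apply/negP => hlt.
have [C sCX [[cC clC]|[cC stC]]] :=
  @RamseyG 4 (Ramsey 4 s) _ e X (conj esym eirr) (ltnW hlt).
  by apply: nk4; apply: (k4_of x0 (conj esym eirr) cC clC).
pose e2 : rel T := fun x y => e (pw x) (pw y).
have se2 : simple_graph e2 by split; [move=> x y; apply: esym | move=> x; apply: eirr].
have hC : Ramsey 4 s <= #|C| by rewrite cC.
have [D sDC [[cD clD]|[cD stD]]] := @RamseyG 4 s _ e2 C se2 hC.
  apply: nk4; apply: (@k4_of _ e x0 (pw @: D) (conj esym eirr)).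
    rewrite card_in_imset // => x y xD yD; apply: pwinj.
      by apply: (subsetP sCX); apply: (subsetP sDC).
    by apply: (subsetP sCX); apply: (subsetP sDC).
  apply/cliqueP => _ _ /imsetP [x xD ->] /imsetP [y yD ->] nxy.
  move/cliqueP: clD; apply => //; apply: contra nxy => /eqP -> //.
have sDX : forall x, x \in D -> x \in X.
  by move=> x xD; apply: (subsetP sCX); apply: (subsetP sDC).
apply: nsdk; apply: (@sdk_of _ e x0 s v D pw (conj esym eirr) cD).
- by move=> x /sDX /(subsetP sXB) /hBj.
- move=> x /sDX /pwW; rewrite !inE negb_or => /andP [nb _].
  by apply: contra nb => evp; apply: (in_nbhdS vS evp).
- move=> x y xD yD; move/stableP: stC; apply; exact: (subsetP sDC).
- by move/stableP: stD.
- move=> x y xD yD; case: (eqVneq x y) => [->|nxy].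
    by rewrite esym pwx // sDX.
  by apply/negbTE; rewrite esym; apply: pwo => //; apply: sDX.
- move=> x /sDX /pwW; rewrite !inE negb_or => /andP [_ nS].
  by apply: contra nS => /eqP <-.
Qed.

Lemma Bparts_sub (T : finType) (e : rel T) (x0 : T) (B : {set T}) vs :
  forall (acc : {set T}) j b, j < size vs -> b \in nth set0 (Bparts_aux e B acc vs) j ->
  (b \in B) && e (nth x0 vs j) b.
Proof.
elim: vs => [|v vs IH] acc [|j] b //= hj.
  by rewrite !inE => /andP [/andP [_ ->] ->].
exact: IH.
Qed.

Lemma Bparts_cover (T : finType) (e : rel T) (B : {set T}) vs :
  forall (acc : {set T}) b, b \in B -> (exists2 v, v \in vs & e v b) ->
  b \in acc \/ exists2 j, j < size vs & b \in nth set0 (Bparts_aux e B acc vs) j.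
Proof.
elim: vs => [|v vs IH] acc b bB [u]; first by rewrite in_nil.
rewrite inE => /orP [/eqP ->|uvs] eub.
  case bacc: (b \in acc); first by left.
  by right; exists 0 => //=; rewrite !inE bacc bB eub.
case bacc: (b \in acc); first by left.
have [|[j hj hb]] := IH (acc :|: [set w in B :\: acc | e v w]) b bB (ex_intro2 _ _ u uvs eub).
  rewrite inE bacc /= => hb; right; exists 0 => //.
by right; exists j.+1.
Qed.

Lemma bigcup_seqP (T : finType) (x : T) (Xs : seq {set T}) :
  reflect (exists2 X, X \in Xs & x \in X) (x \in \bigcup_(X <- Xs) X).
Proof.
elim: Xs => [|X Xs IH]; rewrite ?big_nil ?big_cons.
  by rewrite inE; constructor => [[X]]; rewrite in_nil.
rewrite inE; apply: (iffP orP) => [[xX|/IH [Y YXs xY]]|[Y]].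
- by exists X; rewrite ?mem_head.
- by exists Y; rewrite // inE YXs orbT.
- rewrite inE => /orP [/eqP ->|YXs] xY; first by left.
  by right; apply/IH; exists Y.
Qed.

Lemma card_bigcup_seq (T : finType) (Xs : seq {set T}) r :
  (forall X, X \in Xs -> #|X| <= r) -> #|\bigcup_(X <- Xs) X| <= size Xs * r.
Proof.
elim: Xs => [|X Xs IH] H; first by rewrite big_nil cards0.
rewrite big_cons /= mulSn; apply: leq_trans (leq_card_setU _ _) _.
apply: leq_add; first by apply: H; rewrite mem_head.
by apply: IH => Y YXs; apply: H; rewrite inE YXs orbT.
Qed.

Lemma nbhdS_mono (T : finType) (e : rel T) (S S' : {set T}) :
  S \subset S' -> nbhdS e S \subset nbhdS e S'.
Proof.
move=> sS; apply/subsetP => w /nbhdSP [v vS evw].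
by apply: (in_nbhdS (subsetP sS v vS) evw).
Qed.

Lemma step_props (T : finType) (e : rel T) (x0 : T) s (S S' : {set T}) :
  simple_graph e -> induced_free (sdk_rel s) e -> induced_free (complete_rel 4) e ->
  constr_step e S S' ->
  [/\ S \subset S', S' \subset S :|: nbhdS e S,
      #|S'| <= #|S| * (1 + Ramsey 4 (Ramsey 4 s)) &
      forall w b, w \notin S :|: nbhdS e S -> b \in nbhdS e S -> e b w ->
        w \in nbhdS e S'].
Proof.
move=> se nsdk nk4 [vs [uvs [memvs [Xs [szXs [minXs ->]]]]]].
set B := nbhdS e S.
have XsP : forall X, X \in Xs -> exists2 j, j < size vs &
    minset (dom_prop e (~: (B :|: S)) (nth set0 (Bparts e B vs) j)) X.
  move=> X /(nthP set0) [j hj <-]; exists j; rewrite -?szXs //.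
  by apply: minXs; rewrite -szXs.
have XsB : forall X, X \in Xs -> X \subset B.
  move=> X /XsP [j hj /minsetP [/andP [sX _] _]].
  apply/subsetP => x /(subsetP sX) hx.
  by have /andP [] := Bparts_sub x0 hj hx.
split.
- exact: subsetUl.
- apply/subsetP => x; rewrite !inE => /orP [->//|/bigcup_seqP [X XXs xX]].
  by rewrite (subsetP (XsB X XXs) x xX) orbT.
- apply: leq_trans (leq_card_setU _ _) _.
  have cS : #|S| = size vs.
    rewrite -(card_uniqP uvs); apply: eq_card => x; by rewrite memvs.
  have : #|\bigcup_(X <- Xs) X| <= size Xs * Ramsey 4 (Ramsey 4 s).
    apply: card_bigcup_seq => X /XsP [j hj hmin].
    apply: (minX_bound x0 se nsdk nk4 (v := nth x0 vs j) _ _ hmin).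
      by rewrite -memvs mem_nth.
    move=> b hb; by have /andP [] := Bparts_sub x0 hj hb.
  rewrite szXs -cS mulnDr muln1; lia.
- move=> w b wn bB ebw.
  have /nbhdSP [v vS evb] := bB.
  have [|[j hj hbj]] := @Bparts_cover T e B vs set0 b bB (ex_intro2 _ _ v (etrans (memvs v) vS) evb).
    by rewrite inE.
  have [/andP [sX dX] _] := minsetP (minXs j hj).
  have wW : w \in ~: (B :|: S) by move: wn; rewrite !inE orbC.
  move/forallP: dX => /(_ w); rewrite wW /=.
  have -> : [exists b0 in nth set0 (Bparts e B vs) j, e w b0].
    apply/existsP; exists b; rewrite hbj /=.
    by case: se => esym _; rewrite esym.
  move=> /existsP [x /andP [xX ewx]].
  apply: (in_nbhdS (v := x)); last by case: se => esym _; rewrite esym.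
  rewrite inE; apply/orP; right; apply/bigcup_seqP.
  exists (nth set0 Xs j) => //; apply: mem_nth; by rewrite szXs.
Qed.

Definition ipath (T : finType) (e : rel T) (x0 : T) (p : seq T) :=
  forall k l, k < size p -> l < size p ->
    e (nth x0 p k) (nth x0 p l) = (k.+1 == l) || (l.+1 == k).

Lemma ipath_rcons (T : finType) (e : rel T) (x0 : T) p w :
  simple_graph e -> ipath e x0 p ->
  (forall k, k < size p -> e (nth x0 p k) w = (k.+1 == size p)) ->
  ipath e x0 (rcons p w).
Proof.
move=> [esym eirr] hp hw k l; rewrite size_rcons !nth_rcons => hk hl.
have [hk'|->] : k < size p \/ k = size p by lia.
  have [hl'|->] : l < size p \/ l = size p by lia.
    by rewrite hk' hl' hp.
  rewrite hk' ltnn eqxx hw //.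
  by case: eqP => //= _; symmetry; apply/eqP; lia.
rewrite ltnn eqxx.
have [hl'|->] : l < size p \/ l = size p by lia.
  rewrite hl' esym hw //.
  by case: eqP => //= _; symmetry; apply/eqP; lia.
by rewrite ltnn eqxx eirr; symmetry; apply/negbTE; rewrite negb_or; apply/andP; split; apply/eqP; lia.
Qed.

Lemma ipath_induced (T : finType) (e : rel T) (x0 : T) t p :
  uniq p -> size p = t -> ipath e x0 p -> has_induced (path_rel t) e.
Proof.
move=> up sp hp; exists (fun i : 'I_t => nth x0 p i); split.
  by move=> i j /eqP; rewrite nth_uniq ?sp // => /eqP /val_inj.
by move=> i j; rewrite hp ?sp.
Qed.

Lemma path_exit (T : finType) (e : rel T) (U : {set T}) p :
  forall x, path e x p -> x \in U -> last x p \notin U ->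
  exists u v, [/\ u \in U, v \notin U & e u v].
Proof.
elim: p => [|y p IH] x /=; first by move=> _ ->.
move=> /andP [exy py] xU ly.
case yU: (y \in U); first exact: IH py yU ly.
by exists x, y; rewrite yU.
Qed.

Theorem lemma3p3 (s t : nat) (T : finType) (e : rel T) (a : T)
  (S : nat -> {set T}) :
  0 < s -> 2 <= t ->
  simple_graph e -> connected_graph e ->
  induced_free (path_rel t) e ->
  induced_free (sdk_rel s) e ->
  induced_free (complete_rel 4) e ->
  S 1 = [set a] ->
  (forall i, 1 <= i <= t - 2 -> constr_step e (S i) (S i.+1)) ->
  #|S (t - 1)| <= (1 + Ramsey 4 (Ramsey 4 s)) ^ (t - 2) /\
  ~: (S (t - 1) :|: nbhdS e (S (t - 1))) = set0.
Proof.
move=> s0 t2 se conn nP nS nK S1 Hstep.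
have [esym eirr] := se.
set r := Ramsey 4 (Ramsey 4 s).
have SP : forall i, 1 <= i <= t - 2 ->
  [/\ S i \subset S i.+1, S i.+1 \subset S i :|: nbhdS e (S i),
      #|S i.+1| <= #|S i| * (1 + r) &
      forall w b, w \notin S i :|: nbhdS e (S i) -> b \in nbhdS e (S i) -> e b w ->
        w \in nbhdS e (S i.+1)].
  by move=> i hi; apply: (step_props a se nS nK (Hstep i hi)).
split.
  have H : forall i, 1 <= i <= t - 1 -> #|S i| <= (1 + r) ^ (i - 1).
    elim=> [//|i IH] hi.
    case: i IH hi => [|i] IH hi; first by rewrite S1 cards1.
    have hi' : 1 <= i.+1 <= t - 2 by lia.
    have [_ _ hc _] := SP i.+1 hi'.
    apply: leq_trans hc _.
    have hi2 : 1 <= i.+1 <= t - 1 by lia.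
    have := IH hi2; rewrite !subn1 /= expnSr => h.
    by apply: leq_mul.
  have ht : 1 <= t - 1 <= t - 1 by lia.
  have := H (t - 1) ht.
  by have -> : t - 1 - 1 = t - 2 by lia.
have mono : forall i, 1 <= i <= t - 1 -> a \in S i.
  elim=> [//|i IH] hi.
  case: i IH hi => [|i] IH hi; first by rewrite S1 set11.
  have hi' : 1 <= i.+1 <= t - 2 by lia.
  have [sub _ _ _] := SP i.+1 hi'.
  by apply: (subsetP sub); apply: IH; lia.
have Inv : forall i, 1 <= i <= t - 1 -> forall w b,
    w \notin S i :|: nbhdS e (S i) -> b \in nbhdS e (S i) -> e b w ->
    exists q : seq T, [/\ size q = i,
      (forall u, u \in q -> u \in S i :|: nbhdS e (S i)),
      uniq (rcons q w) & ipath e a (rcons q w)].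
  elim=> [//|i IH] hi w b hw hb ebw.
  case: i IH hi hw hb ebw => [|i] IH hi hw hb ebw.
    exists [:: b]; split => //.
    - by move=> u; rewrite inE => /eqP ->; rewrite inE hb orbT.
    - rewrite /= !inE andbT; apply/eqP => hbw.
      by rewrite hbw eirr in ebw.
    - apply: ipath_rcons => //.
        by move=> k l; rewrite /= !ltnS !leqn0 => /eqP -> /eqP ->; rewrite eirr.
      by move=> k; rewrite /= ltnS leqn0 => /eqP ->.
  have hi' : 1 <= i.+1 <= t - 2 by lia.
  have [sub sub2 _ dom] := SP i.+1 hi'.
  have Bsub := nbhdS_mono e sub.
  have wn_i : w \notin S i.+1 :|: nbhdS e (S i.+1).
    apply: contra hw; rewrite !inE => /orP [h|h].
      by rewrite (subsetP sub _ h).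
    by rewrite (subsetP Bsub _ h) orbT.
  have notadj : forall u, u \in S i.+1 :|: nbhdS e (S i.+1) -> ~~ e u w.
    move=> u; rewrite inE => /orP [uS|uB]; apply/negP => euw;
      move/negP: hw; apply; rewrite inE; apply/orP; right.
      exact: (in_nbhdS (subsetP sub _ uS) euw).
    exact: (dom w u wn_i uB euw).
  have bn : b \notin S i.+1 :|: nbhdS e (S i.+1).
    by apply/negP => hbin; move: (notadj b hbin); rewrite ebw.
  have /nbhdSP [z zS ezb] := hb.
  have zB : z \in nbhdS e (S i.+1).
    move: (subsetP sub2 _ zS); rewrite inE => /orP [zS'|//].
    by move: bn; rewrite inE (in_nbhdS zS' ezb) orbT.
  have hi2 : 1 <= i.+1 <= t - 1 by lia.
  have [q [sq hq uq pq]] := IH hi2 b z bn zB ezb.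
  exists (rcons q b); split.
  - by rewrite size_rcons sq.
  - move=> u; rewrite mem_rcons inE => /orP [/eqP ->|uq'].
      by rewrite inE hb orbT.
    move: (hq u uq'); rewrite !inE => /orP [h|h].
      by rewrite (subsetP sub _ h).
    by rewrite (subsetP Bsub _ h) orbT.
  - rewrite rcons_uniq uq andbT mem_rcons inE negb_or; apply/andP; split.
      by apply/eqP => hwb; rewrite hwb eirr in ebw.
    by apply/negP => /hq hwq; move: wn_i; rewrite hwq.
  - apply: ipath_rcons => // k; rewrite size_rcons nth_rcons ltnS leq_eqVlt.
    case/orP => [/eqP ->|hk]; first by rewrite ltnn !eqxx.
    rewrite hk; have := notadj (nth a q k) (hq _ (mem_nth a hk)).
    move/negbTE => ->; symmetry; apply/negbTE; rewrite eqSS neq_ltn hk //.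
set U := S (t - 1) :|: nbhdS e (S (t - 1)).
apply/setP => w; rewrite in_setC in_set0; apply/negbTE/negPn.
apply: contraT => hw.
have /connectP [p pp lp] := conn a w.
have aU : a \in U by rewrite inE mono //; lia.
have lU : last a p \notin U by rewrite -lp.
have [u [v [uU vU euv]]] := path_exit pp aU lU.
have uB : u \in nbhdS e (S (t - 1)).
  move: uU; rewrite inE => /orP [uS|//].
  by move: vU; rewrite inE (in_nbhdS uS euv) orbT.
have ht : 1 <= t - 1 <= t - 1 by lia.
have [q [sq _ uq pq]] := Inv (t - 1) ht v u vU uB euv.
have sz : size (rcons q v) = t by rewrite size_rcons sq; lia.
by case: (nP (ipath_induced uq sz pq)).
Qed.
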